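(* Let $(S,K,I)$ be a split graph. If $\Phi(S)$ is disconnected, then $S$ is decomposable.
   Context: All graphs are finite and simple. A split graph is a graph $S$ whose vertex set is a disjoint union $V(S)=K\,\dot\cup\,I$ with $K$ a clique and $I$ an independent set; $(K,I)$ is called a bipartition of $S$, and $(S,K,I)$ denotes $S$ together with this fixed bipartition. For a split graph $(S,K,I)$ and distinct $u,v\in I$, $\sigma_{uv}(S)$ is the number of induced subgraphs of $S$ isomorphic to $P_4$ containing both $u$ and $v$. The factor graph $\Phi(S)$ is the loopless multigraph with vertex set $I$ having exactly $\sigma_{uv}(S)$ parallel edges between $u$ and $v$. Graph notions (connected, complete, clique, etc.) applied to $\Phi(S)$ refer to its underlying simple graph, in which $u\sim v$ iff $\sigma_{uv}(S)\ge1$. Tyshkevich composition: for a split graph $(S,K,I)$ and a graph $G$ vertex-disjoint from $S$, $S\circ G$ is the graph with vertex set $V(S)\cup V(G)$ and edge set $E(S)\cup E(G)\cup\{xy: x\in K,\ y\in V(G)\}$. A graph $G$ is decomposable if $G=S\circ H$ for some split graph $S$ and graph $H$, each with at least one vertex; otherwise $G$ is indecomposable. *)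

(* Defs.v *)
From mathcomp Require Import all_boot all_order.
Set Implicit Arguments. Unset Strict Implicit. Unset Printing Implicit Defensive.

Definition simple_graph (T : finType) (adj : rel T) : Prop :=
  symmetric adj /\ irreflexive adj.

Definition is_clique (T : finType) (adj : rel T) (A : {set T}) : Prop :=
  forall x y, x \in A -> y \in A -> x != y -> adj x y.

Definition is_independent (T : finType) (adj : rel T) (A : {set T}) : Prop :=
  forall x y, x \in A -> y \in A -> ~~ adj x y.

Definition split_bipartition (T : finType) (adj : rel T) (K I : {set T}) : Prop :=
  [/\ K :|: I = [set: T], [disjoint K & I], is_clique adj K & is_independent adj I].

Definition induced_P4 (T : finType) (adj : rel T) (X : {set T}) : bool :=
  [exists a, exists b, exists c, exists d,
    [&& X == [set a; b; c; d], uniq [:: a; b; c; d],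
        adj a b, adj b c, adj c d,
        ~~ adj a c, ~~ adj b d & ~~ adj a d]].

Definition sigma (T : finType) (adj : rel T) (u v : T) : nat :=
  #|[set X : {set T} | [&& u \in X, v \in X & induced_P4 adj X]]|.

(* Underlying simple graph of the factor graph Phi(S): vertex set I,
   u ~ v iff u <> v and sigma_uv(S) >= 1. *)
Definition factor_adj (T : finType) (adj : rel T) (I : {set T}) : rel T :=
  fun u v => [&& u \in I, v \in I, u != v & 0 < sigma adj u v].

Definition factor_disconnected (T : finType) (adj : rel T) (I : {set T}) : Prop :=
  exists u v, [/\ u \in I, v \in I & ~~ connect (factor_adj adj I) u v].

(* G (on T) is decomposable: G = S' o H with S' split (bipartition K', I'),
   H a graph, both with at least one vertex, i.e. the vertex set partitions
   into K', I', B with K' u I' and B nonempty, K' a clique, I' independent,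
   every vertex of K' adjacent to every vertex of B, and no vertex of I'
   adjacent to any vertex of B. *)
Definition decomposable (T : finType) (adj : rel T) : Prop :=
  exists (K' I' B : {set T}),
    [/\ K' :|: I' :|: B = [set: T], [disjoint K' & I'] & [disjoint K' :|: I' & B]] /\
    [/\ K' :|: I' != set0, B != set0, is_clique adj K' & is_independent adj I'] /\
    (forall x y, x \in K' -> y \in B -> adj x y) /\
    (forall x y, x \in I' -> y \in B -> ~~ adj x y).

(* Main.v *)
Require Import Defs.
From mathcomp Require Import all_boot all_order.

Theorem corollary2p5 (T : finType) (adj : rel T) (K I : {set T}) :
  simple_graph adj ->
  split_bipartition adj K I ->
  factor_disconnected adj I ->
  decomposable adj.
Proof.
move=> [symA irrA] [covKI disKI cliK indI] [u [v [uI vI ncuv]]].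
have KI : forall z, z \in K -> z \in I -> False.
  by move=> z zK zI; move: (disjointFr disKI zK); rewrite zI.
have KorI : forall z, (z \in K) || (z \in I).
  by move=> z; rewrite -in_setU covKI inE.
pose subb x y := [forall k in K, adj x k ==> adj y k].
have subbP : forall x y, reflect (forall k, k \in K -> adj x k -> adj y k) (subb x y).
  move=> x y; apply: (iffP forallP) => H k.
    by move=> kK; move: (H k); rewrite kK /= => /implyP.
  by apply/implyP => kK; apply/implyP; apply: H.
have subb_tr : forall x y z, subb x y -> subb y z -> subb x z.
  move=> x y z /subbP h1 /subbP h2; apply/subbP => k kK xk.
  by apply: h2 => //; apply: h1.
have subb_refl : forall x, subb x x by move=> x; apply/subbP.
pose inc := fun x y => [&& x \in I, y \in I, ~~ subb x y & ~~ subb y x].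
have inc_fa : forall x y, inc x y -> factor_adj adj I x y.
  move=> x y /and4P[xI yI nxy nyx].
  have xy : x != y by apply: contraNneq nxy => ->.
  move: nxy => /forallPn [k1]; rewrite negb_imply => /andP[k1K].
  rewrite negb_imply => /andP[xk1 yk1].
  move: nyx => /forallPn [k2]; rewrite negb_imply => /andP[k2K].
  rewrite negb_imply => /andP[yk2 xk2].
  have nKI : forall a b, a \in K -> b \in I -> a != b.
    by move=> a b aK bI; apply/eqP => eab; apply: (KI a) => //; rewrite eab.
  have xk1n : x != k1 by rewrite eq_sym nKI.
  have xk2n : x != k2 by rewrite eq_sym nKI.
  have k1yn : k1 != y by rewrite nKI.
  have k2yn : k2 != y by rewrite nKI.
  have k12 : k1 != k2 by apply: contraNneq xk2 => <-.
  rewrite /factor_adj xI yI xy /= /sigma card_gt0.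
  apply/set0Pn; exists [set x; k1; k2; y].
  rewrite inE !inE !eqxx !orbT /=.
  apply/existsP; exists x; apply/existsP; exists k1;
  apply/existsP; exists k2; apply/existsP; exists y.
  rewrite eqxx /= !inE !negb_or xk1n xk2n xy k12 k1yn k2yn xk1 (cliK _ _ k1K k2K k12) /=.
  rewrite symA yk2 xk2 (symA k1) yk1 /=.
  exact: indI.
have ncuv' : ~~ connect inc u v.
  apply: contra ncuv; apply: connect_sub => x y ixy.
  exact: connect1 (inc_fa _ _ ixy).
have prop : forall (P : pred T), P u ->
    (forall x z, connect inc u x -> P x -> inc x z -> P z) ->
    forall x, connect inc u x -> P x.
  move=> P Pu H x /connectP [p pth ->].
  suff: forall w, connect inc u w -> P w -> path inc w p -> P (last w p).
    by move=> /(_ u (connect0 _ _) Pu pth).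
  elim: p {pth} => [|y p IH] w cw Pw //= /andP[wy pth].
  apply: IH pth; first exact: connect_trans cw (connect1 wy).
  exact: H cw Pw wy.
have XI : forall x, connect inc u x -> x \in I.
  apply: prop => // x z _ _ /and4P[_ zI _ _] //.
have cmp : forall x y, connect inc u x -> y \in I -> ~~ connect inc u y ->
    subb x y || subb y x.
  move=> x y cx yI ncy; apply/negPn/negP; rewrite negb_or => /andP[a b].
  have xI := XI _ cx.
  apply: (negP ncy); apply: connect_trans cx (connect1 _).
  by rewrite /inc xI yI a b.
have dir : forall y, y \in I -> ~~ connect inc u y ->
    (forall x, connect inc u x -> subb y x) \/ (forall x, connect inc u x -> subb x y).
  move=> y yI ncy; case/orP: (cmp u y (connect0 _ _) yI ncy) => h; [right|left].
    apply: prop => // x z cx Pxy ixz; move: (ixz) => /and4P[_ _ nxz nzx].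
    have cz : connect inc u z := connect_trans cx (connect1 ixz).
    case/orP: (cmp z y cz yI ncy) => // hyz.
    by move/negP: nxz => []; apply: subb_tr Pxy hyz.
  apply: prop => // x z cx Pxy ixz; move: (ixz) => /and4P[_ _ nxz nzx].
  have cz : connect inc u z := connect_trans cx (connect1 ixz).
  case/orP: (cmp z y cz yI ncy) => // hzy.
  by move/negP: nzx => []; apply: subb_tr hzy Pxy.
have uK : u \notin K by apply/negP => uK; apply: (KI u).
have vK : v \notin K by apply/negP => vK; apply: (KI v).
case: (dir v vI ncuv') => [vlow|vhigh].
- pose K' := [set k in K | [forall x, connect inc u x ==> adj x k]].
  pose I' := [set y in I | ~~ connect inc u y && [forall x, connect inc u x ==> subb y x]].
  exists K', I', (~: (K' :|: I')).
  split; [split|split; [split|split]].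
  + by rewrite setUCr.
  + rewrite disjoint_subset; apply/subsetP => z; rewrite !inE => /andP[zK _].
    by apply/negP => /andP[zI _]; apply: (KI z).
  + by rewrite disjoint_subset; apply/subsetP => z; rewrite !inE negbK.
  + apply/set0Pn; exists v; rewrite !inE vI ncuv' /=; apply/orP; right.
    by apply/forallP => x; apply/implyP; apply: vlow.
  + by apply/set0Pn; exists u; rewrite !inE (negbTE uK) uI connect0 /=.
  + by move=> x y; rewrite !inE => /andP[xK _] /andP[yK _]; apply: cliK.
  + by move=> x y; rewrite !inE => /andP[xI _] /andP[yI _]; apply: indI.
  + move=> x y; rewrite !inE negb_or => /andP[xK /forallP xall] /andP[nyK' nyI'].
    case/orP: (KorI y) => [yK|yI].
      apply: cliK => //; apply: contraNneq nyK' => <-.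
      by rewrite xK; apply/forallP.
    rewrite symA.
    case cy: (connect inc u y); first by move/implyP: (xall y); apply.
    case: (dir y yI (negbT cy)) => [ylow|yhigh].
      move: nyI'; rewrite yI cy /= => /negP []; apply/forallP => w.
      by apply/implyP; apply: ylow.
    by move/subbP: (yhigh u (connect0 _ _)); apply => //; move/implyP: (xall u); apply; apply: connect0.
  + move=> x y; rewrite !inE negb_or => /andP[xI /andP[_ /forallP xall]] /andP[nyK' _].
    case/orP: (KorI y) => [yK|yI]; last exact: indI.
    apply/negP => xy; move: nyK'; rewrite yK /= => /negP []; apply/forallP => w.
    apply/implyP => cw; move/implyP: (xall w) => /(_ cw) /subbP; exact.
- pose K' := [set k in K | [exists x, connect inc u x && adj x k]].
  pose I' := [set y in I | connect inc u y || ~~ [forall x, connect inc u x ==> subb x y]].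
  exists K', I', (~: (K' :|: I')).
  split; [split|split; [split|split]].
  + by rewrite setUCr.
  + rewrite disjoint_subset; apply/subsetP => z; rewrite !inE => /andP[zK _].
    by apply/negP => /andP[zI _]; apply: (KI z).
  + by rewrite disjoint_subset; apply/subsetP => z; rewrite !inE negbK.
  + by apply/set0Pn; exists u; rewrite !inE uI connect0 /= orbT.
  + apply/set0Pn; exists v; rewrite !inE (negbTE vK) vI (negbTE ncuv') /= negbK.
    by apply/forallP => x; apply/implyP; apply: vhigh.
  + by move=> x y; rewrite !inE => /andP[xK _] /andP[yK _]; apply: cliK.
  + by move=> x y; rewrite !inE => /andP[xI _] /andP[yI _]; apply: indI.
  + move=> x y; rewrite !inE negb_or => /andP[xK /existsP [w /andP[cw wx]]] /andP[nyK' nyI'].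
    case/orP: (KorI y) => [yK|yI].
      apply: cliK => //; apply: contraNneq nyK' => <-.
      by rewrite xK /=; apply/existsP; exists w; rewrite cw.
    move: nyI'; rewrite yI /= negb_or negbK => /andP[_ /forallP yall].
    rewrite symA; move/implyP: (yall w) => /(_ cw) /subbP; apply => //.
  + move=> x y; rewrite !inE negb_or => /andP[xI xI'] /andP[nyK' _].
    case/orP: (KorI y) => [yK|yI]; last exact: indI.
    apply/negP => xy; move: nyK'; rewrite yK /= => /negP []; apply/existsP.
    case cx: (connect inc u x); first by exists x; rewrite cx.
    move: xI'; rewrite cx /=.
    case: (dir x xI (negbT cx)) => [xlow|xhigh].
      move=> _; exists u; rewrite connect0 /=.
      by move/subbP: (xlow u (connect0 _ _)); apply.
    by move=> /negP []; apply/forallP => w; apply/implyP; apply: xhigh.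
Qed.
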